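(* In the setting and notation of the context, for every $t\in\{1,\dots,n-1\}$, $$\textsf{ALG}_{t+1}\ \ge\ \beta_t\ \ge\ \frac{1}{\phi^2}\mathbb{E}[y_t]\ =\ \frac1\phi\,\alpha_t,$$ where $\textsf{ALG}_{t+1}$ is the expected value accepted by $\textsf{ALG}$ when run only on boxes $t+1,\dots,n$ (arriving in this order).
   Context: There are $n$ boxes arriving in order $1,2,\dots,n$; box $s$ contains an independent nonnegative value $v_s\sim F_s$ with finite expectation. $\phi=\frac{1+\sqrt5}{2}$. For each $t$, $y_t=\max_{s>t}v_s$ ($y_n=0$), $\alpha_t=\frac1\phi\mathbb{E}[y_t]$, and $\beta_t$ is the unique $x\ge0$ solving $\mathbb{E}[(y_t-\phi x)^+]=x$ (so $\alpha_n=\beta_n=0$). The algorithm $\textsf{ALG}$ scans the boxes in arrival order and accepts (and stops at) the first box $t$ whose realized value $\theta_t$ satisfies $\theta_t\ge\tau_t:=\max(\alpha_t,\beta_t)$; it receives $0$ if it accepts nothing. When $\textsf{ALG}$ is run only on boxes $t+1,\dots,n$, it uses the same thresholds $\tau_{t+1},\dots,\tau_n$. *)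

(* Defs.v *)
From HB Require Import structures.
From mathcomp Require Import all_boot all_order all_algebra.
From mathcomp Require Import all_classical all_reals all_analysis.
Set Implicit Arguments. Unset Strict Implicit. Unset Printing Implicit Defensive.
Import Order.TTheory GRing.Theory Num.Theory.
Local Open Scope ring_scope.
Local Open Scope classical_set_scope.

Definition phi (R : realType) : R := (1 + Num.sqrt 5) / 2.

Definition Expect d (T : measurableType d) (R : realType) (P : probability T R)
  (f : T -> R) : \bar R := (\int[P]_w (f w)%:E)%E.

(* Mutual independence of the random variables X 1, ..., X n (boxes 1..n):
   product rule for every family of Borel sets (taking B i = setT for some i
   gives the product rule for every subfamily). *)
Definition mutually_independent d (T : measurableType d) (R : realType)
  (P : probability T R) (n : nat) (X : nat -> {RV P >-> R}) : Prop :=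
  forall B : nat -> set R, (forall i, measurable (B i)) ->
  P (\bigcap_(i in [set i : nat | (1 <= i <= n)%N]) (X i @^-1` B i)) =
  (\prod_(1 <= i < n.+1) P (X i @^-1` B i))%E.

Definition ymax d (T : measurableType d) (R : realType) (P : probability T R)
  (n : nat) (X : nat -> {RV P >-> R}) (t : nat) (w : T) : R :=
  \big[Num.max/0]_(t.+1 <= s < n.+1) X s w.

(* alpha_t = (1/phi) E[y_t]  (E[y_t] is finite since the v_s have finite mean) *)
Definition alpha d (T : measurableType d) (R : realType) (P : probability T R)
  (n : nat) (X : nat -> {RV P >-> R}) (t : nat) : R :=
  (phi R)^-1 * fine (Expect P (ymax n X t)).

Fixpoint algv d (T : measurableType d) (R : realType) (P : probability T R)
  (X : nat -> {RV P >-> R}) (tau : nat -> R) (m k : nat) (w : T) : R :=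
  match m with
  | 0 => 0
  | m'.+1 => if tau k <= X k w then X k w else algv X tau m' k.+1 w
  end.

Arguments Expect {d T R} P f.
Arguments mutually_independent {d T R} P n X.
Arguments ymax {d T R P} n X t w.
Arguments alpha {d T R} P n X t.
Arguments algv {d T R P} X tau m k w.

(* Main.v *)
Require Import Defs.
From HB Require Import structures.
From mathcomp Require Import all_boot all_order all_algebra.
From mathcomp Require Import all_classical all_reals all_analysis measurable_realfun.
From mathcomp Require Import lra zify.
Import Order.TTheory GRing.Theory Num.Theory.
Local Open Scope ring_scope.
Local Open Scope classical_set_scope.

Section Indep.
Context d (T : measurableType d) (R : realType) (P : probability T R)
  (n : nat) (X : nat -> {RV P >-> R}).

Definition Rect (C : nat -> set R) :=
  \bigcap_(i in [set i : nat | (1 <= i <= n)%N]) (X i @^-1` C i).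
Definition upd (C : nat -> set R) (k : nat) (S : set R) :=
  fun i => if i == k then S else C i.

Lemma Rect_meas C : (forall i, measurable (C i)) -> measurable (Rect C).
Proof.
move=> mC; apply: bigcap_measurableType => i _; exact: measurable_funPTI.
Qed.

Lemma Rect_upd C j G : (1 <= j <= n)%N ->
  Rect (upd C j (C j `&` G)) = Rect C `&` X j @^-1` G.
Proof.
move=> hj; apply/seteqP; split => w /=.
- move=> h; split.
  + move=> i hi; have := h i hi; rewrite /upd; case: eqP => [->|_] //; by case.
  + by have := h j hj; rewrite /upd eqxx => -[].
- move=> [h hG] i hi; rewrite /upd; case: eqP => [->|_]; last exact: h.
  by split => //; exact: h.
Qed.

Lemma RectT : Rect (fun _ => setT) = setT.
Proof. by apply/seteqP; split => w //= _ i _. Qed.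

End Indep.
Arguments Rect {d T R P} n X C.
Arguments upd {R} C k S.

Section Indep2.
Context d (T : measurableType d) (R : realType) (P : probability T R)
  (n : nat) (X : nat -> {RV P >-> R}).
Hypothesis Xindep : mutually_independent P n X.

Lemma Rect_prod C k S : (forall i, measurable (C i)) -> measurable S ->
  (1 <= k <= n)%N -> C k = setT ->
  P (Rect n X (upd C k S)) = (P (Rect n X C) * P (X k @^-1` S))%E.
Proof.
move=> mC mS hk Ck.
rewrite /Rect !Xindep //; last first.
  by move=> i; rewrite /upd; case: eqP.
have kin : k \in index_iota 1 n.+1 by rewrite mem_index_iota ltnS.
rewrite (bigD1_seq k) //= ?iota_uniq // [in RHS](bigD1_seq k) //= ?iota_uniq //.
rewrite /upd eqxx Ck preimage_setT probability_setT mul1e muleC.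
congr (_ * _)%E; apply: eq_bigr => i /negbTE ->; done.
Qed.

End Indep2.

Section Ev.
Context d (T : measurableType d) (R : realType) (P : probability T R)
  (n : nat) (X : nat -> {RV P >-> R}).
Hypothesis Xindep : mutually_independent P n X.
Variable tau : nat -> R.

Lemma algv_meas m j : measurable_fun setT (algv X tau m j).
Proof.
elim: m j => [|m IH] j /=; first exact: measurable_cst.
apply: measurable_fun_ifT => //.
apply: measurable_fun_ler => //; exact: measurable_cst.
Qed.

Definition Wset u m j := [set w | u <= algv X tau m j w].

Lemma Wset_meas u m j : measurable (Wset u m j).
Proof.
rewrite /Wset (_ : [set w | _] = algv X tau m j @^-1` `[u, +oo[%classic).
  rewrite -[X in measurable X]setTI; apply: algv_meas => //.
by apply/seteqP; split => w /=; rewrite in_itv /= andbT.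
Qed.

Lemma upd_meas (C : nat -> set R) k S : (forall i, measurable (C i)) -> measurable S ->
  forall i, measurable (upd C k S i).
Proof. by move=> mC mS i; rewrite /upd; case: eqP. Qed.

Lemma upd_comm (C : nat -> set R) k S j H : j != k ->
  upd (upd C k S) j H = upd (upd C j H) k S.
Proof.
move=> jk; apply: funext => i; rewrite /upd.
case: (eqVneq i j) => [->|ij]; first by rewrite (negbTE jk).
by [].
Qed.

Definition G1 u j := `[Num.max (tau j) u, +oo[%classic : set R.
Definition G2 j := `]-oo, tau j[%classic : set R.

Lemma decompW C u m j : (forall i, measurable (C i)) -> (1 <= j <= n)%N ->
  P (Rect n X C `&` Wset u m.+1 j) =
  (P (Rect n X (upd C j (C j `&` G1 u j))) +
   P (Rect n X (upd C j (C j `&` G2 j)) `&` Wset u m j.+1))%E.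
Proof.
move=> mC hj; rewrite !Rect_upd //.
rewrite -measureU; first last.
- apply/seteqP; split => w //= [[_]]; rewrite /G1 /G2 /= !in_itv /= andbT.
  by move=> h1 [[_ h2] _]; move: h1; rewrite ge_max => /andP[h3 _];
    move: (lt_le_trans h2 h3); rewrite ltxx.
- apply: measurableI; last exact: Wset_meas.
  apply: measurableI; first exact: Rect_meas.
  apply: measurable_funPTI; exact: measurable_itv.
- apply: measurableI; first exact: Rect_meas.
  apply: measurable_funPTI; exact: measurable_itv.
congr (P _); apply/seteqP; split => w /=.
- move=> [hR]; rewrite /Wset /= /G1 /G2 /= !in_itv /= andbT ge_max.
  case: ifP => h hu; first by left; split => //; rewrite h.
  by right; split => //; split => //; rewrite ltNge h.
- rewrite /Wset /G1 /G2 /= !in_itv /= andbT ge_max.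
  case=> [[hR /andP[h1 h2]]|[[hR h1] h2]]; split => //; first by rewrite h1.
  by rewrite /= (_ : (tau j <= X j w) = false) // leNgt h1.
Qed.

Lemma Wset_indep u k S : 0 < u -> measurable S -> (1 <= k <= n)%N ->
  forall m j C, (k < j)%N -> (j + m <= n.+1)%N ->
  (forall i, measurable (C i)) -> C k = setT ->
  P (Rect n X (upd C k S) `&` Wset u m j) =
  (P (Rect n X C `&` Wset u m j) * P (X k @^-1` S))%E.
Proof.
move=> u0 mS hk; elim=> [|m IH] j C kj jm mC Ck.
  rewrite /Wset /= (_ : [set w | u <= 0] = set0) ?setI0 ?measure0 ?mul0e //.
  by apply/seteqP; split => w //=; rewrite leNgt u0.
have hj : (1 <= j <= n)%N.
  apply/andP; split; first by apply: leq_ltn_trans kj.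
  by move: jm; rewrite addnS ltnS => /(leq_trans _)->//; rewrite leq_addr.
have jk : j != k by rewrite gt_eqF.
rewrite decompW //; last exact: upd_meas.
rewrite decompW // ge0_muleDl //.
have -> : upd C k S j = C j by rewrite /upd (negbTE jk).
rewrite !(upd_comm _ _ _ _ _ jk).
have mC1 : forall i, measurable (upd C j (C j `&` G1 u j) i).
  move=> i; apply: upd_meas => //; apply: measurableI => //; exact: measurable_itv.
have mC2 : forall i, measurable (upd C j (C j `&` G2 j) i).
  move=> i; apply: upd_meas => //; apply: measurableI => //; exact: measurable_itv.
have Ck1 : upd C j (C j `&` G1 u j) k = setT by rewrite /upd eq_sym (negbTE jk).
have Ck2 : upd C j (C j `&` G2 j) k = setT by rewrite /upd eq_sym (negbTE jk).
congr (_ + _)%E.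
- exact: (@Rect_prod _ _ _ _ _ _ Xindep _ _ _ mC1 mS hk Ck1).
- apply: (IH j.+1 _ (ltnW kj) _ mC2 Ck2).
  by rewrite addSnnS.
Qed.

End Ev.

Lemma count_bound (R : realType) (a : R) (N : nat) :
  let S := \sum_(i < N) (((i.+1)%:R <= a)%R)%:R : R in
  (0 <= a -> S <= a) /\ S <= N%:R /\ (forall c, c <= N%:R -> c <= a - 1 -> c <= S).
Proof.
elim: N => [|N [IH1 [IH2 IH3]]] /=.
  rewrite big_ord0; split => // c c0 _; done.
rewrite big_ord_recr /=.
case: (boolP ((N.+1)%:R <= a)) => h /=.
- have hN : (N.+1)%:R = N%:R + 1 :> R by rewrite -addn1 natrD.
  rewrite hN in h *; split; [move=> _; lra|split; first lra].
  move=> c c1 c2; have := IH3 (c - 1); lra.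
- rewrite -ltNge in h; rewrite addr0.
  have hN : (N.+1)%:R = N%:R + 1 :> R by rewrite -addn1 natrD.
  rewrite hN in h *; split => //; split; first lra.
  move=> c c1 c2; apply: IH3 => //; lra.
Qed.

Section Approx.
Context d (T : measurableType d) (R : realType) (P : probability T R).
Variable Z : T -> R.
Hypothesis mZ : measurable_fun setT Z.
Hypothesis Z0 : forall x, 0 <= Z x.
Hypothesis iZ : P.-integrable setT (EFin \o Z).

Definition Lev u := [set y | u <= Z y].

Lemma Lev_meas u : measurable (Lev u).
Proof.
rewrite /Lev (_ : [set y | _] = Z @^-1` `[u, +oo[%classic).
  rewrite -[X in measurable X]setTI; exact: mZ.
by apply/seteqP; split => w /=; rewrite in_itv /= andbT.
Qed.

Definition Zm (m : nat) x : R := (m.+1%:R : R)^-1 *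
  \sum_(i < (m.+1 ^ 2)%N) \1_(Lev ((i.+1)%:R / m.+1%:R)) x.

Lemma Zm_meas m : measurable_fun setT (Zm m).
Proof.
apply: measurable_funM; first exact: measurable_cst.
apply: measurable_sum => i; exact/measurable_indic/Lev_meas.
Qed.

Lemma Zm_ge0 m x : 0 <= Zm m x.
Proof.
apply: mulr_ge0; first by rewrite invr_ge0.
by apply: sumr_ge0 => i _; rewrite indicE.
Qed.

Lemma indic_Lev u x : \1_(Lev u) x = ((u <= Z x)%R)%:R :> R.
Proof.
rewrite indicE; case: (boolP (u <= Z x)) => h.
- by rewrite mem_set.
- by rewrite memNset // => h'; rewrite /Lev /= h' in h.
Qed.

Lemma Zm_bounds m x : Zm m x <= Z x /\
  (Z x <= m.+1%:R -> Z x - (m.+1%:R)^-1 <= Zm m x).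
Proof.
have M0 : 0 < m.+1%:R :> R by rewrite ltr0n.
rewrite /Zm.
under eq_bigr => i _ do rewrite indic_Lev ler_pdivrMr //.
have [h1 [h2 h3]] := @count_bound R (Z x * m.+1%:R) (m.+1 ^ 2).
set S := \sum_(_ < _) _ in h1 h2 h3 *.
have MV : m.+1%:R * (m.+1%:R)^-1 = 1 :> R by rewrite mulfV // gt_eqF.
have V0 : 0 < (m.+1%:R)^-1 :> R by rewrite invr_gt0.
have hS := h1 (mulr_ge0 (Z0 x) (ltW M0)).
have e : (m.+1%:R)^-1 * (Z x * m.+1%:R) = Z x.
  by rewrite mulrC -mulrA mulfV ?mulr1 // gt_eqF.
split; first by apply: le_trans (ler_wpM2l (ltW V0) hS) _; rewrite e.
move=> hZ; have hN : (m.+1 ^ 2)%:R = m.+1%:R * m.+1%:R :> R by rewrite natrX expr2.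
have := h3 (Z x * m.+1%:R - 1); rewrite hN => /(_ _ (lexx _)) h4.
have h5 : Z x * m.+1%:R - 1 <= S by apply: h4; nra.
apply: le_trans (ler_wpM2l (ltW V0) h5); rewrite mulrBr e mulr1 //.
Qed.

Lemma Zm_int D (mD : measurable D) m :
  (\int[P]_(x in D) (Zm m x)%:E = (((m.+1%:R)^-1)%:E *
    \sum_(i < (m.+1 ^ 2)%N) P (Lev ((i.+1)%:R / m.+1%:R)%R `&` D)))%E.
Proof.
rewrite /Zm; under eq_integral => x _ do rewrite EFinM.
have mI i : measurable_fun setT (\1_(Lev ((i.+1)%:R / m.+1%:R)) : T -> R).
  exact/measurable_indic/Lev_meas.
have mI' i : measurable_fun D (EFin \o (\1_(Lev ((i.+1)%:R / m.+1%:R)) : T -> R)).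
  apply/measurable_EFinP; exact: measurable_funS (mI i).
have I0 i x : D x -> (0 <= (\1_(Lev ((i.+1)%:R / m.+1%:R)) x : R)%:E)%E.
  by move=> _; rewrite lee_fin indicE.
have S0 x : D x -> (0 <= (\sum_(i < (m.+1 ^ 2)%N) (\1_(Lev ((i.+1)%:R / m.+1%:R)) x : R))%:E)%E.
  by move=> _; rewrite lee_fin; apply: sumr_ge0 => i _; rewrite indicE.
have mS : measurable_fun D (EFin \o (fun x => \sum_(i < (m.+1 ^ 2)%N) (\1_(Lev ((i.+1)%:R / m.+1%:R)) x : R))).
  apply/measurable_EFinP; apply: (measurable_funS measurableT) => //.
  by apply: measurable_sum => i; exact: mI.
have V0 : (0 <= (m.+1%:R : R)^-1) by rewrite invr_ge0.
rewrite ge0_integralZl_EFin //.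
congr (_ * _)%E.
under eq_integral => x _ do rewrite -sumEFin.
rewrite ge0_integral_sum //.
apply: eq_bigr => i _; rewrite integral_indic //; exact: Lev_meas.
by move=> i; exact: mI'.
Qed.

Lemma Zm_cvg x : (fun m => (Zm m x)%:E) @ \oo --> (Z x)%:E.
Proof.
apply/fine_cvgP; split; first exact: nearW.
apply/cvgrPdist_le => e e0 /=.
near=> m.
have h1 : Z x <= m.+1%:R.
  apply: (@le_trans _ _ m%:R); last by rewrite ler_nat.
  by near: m; exact: nbhs_infty_ger.
have h2 : e^-1 <= m%:R by near: m; exact: nbhs_infty_ger.
have [b1 b2] := Zm_bounds m x.
have := b2 h1 => b3.
rewrite ger0_norm; last by rewrite subr_ge0.
have h3 : (m.+1%:R)^-1 <= e.
  rewrite -[e]invrK lef_pV2 ?posrE ?invr_gt0 ?ltr0n //.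
  by apply: (le_trans h2); rewrite ler_nat.
apply: (le_trans _ h3); by rewrite lerBlDr -lerBlDl.
Unshelve. all: by end_near.
Qed.

Lemma Zm_int_cvg D (mD : measurable D) :
  (fun m => \int[P]_(x in D) (Zm m x)%:E)%E @ \oo --> (\int[P]_(x in D) (Z x)%:E)%E.
Proof.
have m1 : forall m, measurable_fun D (fun x => (Zm m x)%:E).
  move=> m; apply/measurable_EFinP; apply: (measurable_funS measurableT) => //.
  exact: Zm_meas.
have m2 : measurable_fun D (EFin \o Z).
  apply/measurable_EFinP; exact: (measurable_funS measurableT).
have c3 : \forall x \ae P, D x -> (fun m => (Zm m x)%:E) @ \oo --> (EFin \o Z) x.
  by apply: aeW => x _; exact: Zm_cvg.
have i4 : P.-integrable D (EFin \o Z) by exact: integrableS iZ.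
have b5 : \forall x \ae P, forall m, D x -> (`|(Zm m x)%:E| <= (EFin \o Z) x)%E.
  apply: aeW => x m _; rewrite gee0_abs ?lee_fin ?Zm_ge0 //.
  by have [] := Zm_bounds m x.
have [_ _ ] := @dominated_convergence _ _ _ P D mD (fun m x => (Zm m x)%:E)
  (EFin \o Z) (EFin \o Z) m1 m2 c3 i4 b5.
done.
Qed.

Lemma indep_int (A : set T) (mA : measurable A) :
  (forall u, 0 < u -> P (Lev u `&` A) = (P (Lev u) * P A)%E) ->
  (\int[P]_(x in A) (Z x)%:E = P A * \int[P]_x (Z x)%:E)%E.
Proof.
move=> H.
have eq m : (\int[P]_(x in A) (Zm m x)%:E = P A * \int[P]_x (Zm m x)%:E)%E.
  rewrite !Zm_int //.
  under eq_bigr => i _ do rewrite H ?divr_gt0 ?ltr0n //.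
  under [in RHS]eq_bigr => i _ do rewrite setIT.
  rewrite -ge0_sume_distrl; last by move=> i _; exact: measure_ge0.
  by rewrite muleA muleC muleA.
have h1 := @Zm_int_cvg A mA.
have h2 := cvgeZl (fin_num_measure P _ mA) (@Zm_int_cvg setT measurableT).
rewrite (funext eq) in h1.
first [exact: (cvg_unique h1 h2) | exact: (cvg_unique _ h1 h2) | apply: cvg_unique; [exact: h1|exact: h2] | (rewrite -(cvg_lim _ h1); last done; rewrite (cvg_lim _ h2) //)].
Qed.

End Approx.

Lemma phi_facts (R : realType) : 1 < phi R /\ phi R ^+ 2 = 1 + phi R.
Proof.
rewrite /phi.
have s5 : Num.sqrt 5 ^+ 2 = 5 :> R by rewrite sqr_sqrtr // ler0n.
have s0 : 0 <= Num.sqrt 5 :> R by exact: sqrtr_ge0.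
split.
- rewrite ltr_pdivlMr //; nra.
- rewrite expr2; move: s5; rewrite expr2 => s5; nra.
Qed.

Lemma ptwise (R : realType) (v yj r ta b pb : R) : 0 <= yj -> b <= ta -> ta <= r -> pb <= r ->
  Num.max (Num.max v yj - r) 0 <= (if ta <= v then v - b else 0) + Num.max (yj - pb) 0.
Proof.
move=> y0 bt tr pr.
have m1 : yj - pb <= Num.max (yj - pb) 0 by rewrite le_max lexx.
have m0 : 0 <= Num.max (yj - pb) 0 by rewrite le_max lexx orbT.
case: (lerP v yj) => hv;
  rewrite ge_max; apply/andP; split;
  try (by case: ifP => h; [apply: addr_ge0 => //; lra|rewrite add0r]).
- case: ifP => h; lra.
- case: ifP => h; last (move/negbT: h; rewrite -ltNge => h); lra.
Qed.

Lemma memA (R : realType) (T : Type) (f : T -> R) (a : R) w : (w \in f @^-1` `]-oo, a[%classic) = (f w < a).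
Proof. by apply/idP/idP; [move=> /set_mem; rewrite /= in_itv | move=> h; apply/mem_set; rewrite /= in_itv]. Qed.

Section Ymax.
Context d (T : measurableType d) (R : realType) (P : probability T R)
  (n : nat) (X : nat -> {RV P >-> R}).

Lemma ymax_rec k w : (k < n)%N ->
  ymax n X k w = Num.max (X k.+1 w) (ymax n X k.+1 w).
Proof. by move=> kn; rewrite /ymax big_ltn // ltnS. Qed.

Lemma ymax_n w : ymax n X n w = 0.
Proof. by rewrite /ymax big_geq. Qed.

Lemma ymax_ge0 k w : 0 <= ymax n X k w.
Proof.
rewrite /ymax; elim: (index_iota _ _) => [|i s IH]; first by rewrite big_nil.
by rewrite big_cons le_max IH orbT.
Qed.

Lemma bigmax_meas (s : seq nat) :
  measurable_fun setT (fun w => \big[Num.max/0]_(i <- s) X i w).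
Proof.
elim: s => [|i s IH].
  by under eq_fun do rewrite big_nil; exact: measurable_cst.
under eq_fun do rewrite big_cons.
exact: measurable_maxr.
Qed.

Lemma ymax_meas k : measurable_fun setT (ymax n X k).
Proof. exact: bigmax_meas. Qed.

End Ymax.

Section Main.
Context d (T : measurableType d) (R : realType)
  (P : probability T R) (n : nat) (X : nat -> {RV P >-> R})
  (beta : nat -> R).
Hypothesis Xindep : mutually_independent P n X.
Hypothesis Xnneg : forall s w, (1 <= s <= n)%N -> 0 <= X s w.
Hypothesis beta_def : forall t, (1 <= t <= n)%N ->
     0 <= beta t /\
     Expect P (fun w => Num.max (ymax n X t w - phi R * beta t) 0) = (beta t)%:E.

Lemma mEy k : measurable_fun setT (EFin \o ymax n X k).
Proof. by apply/measurable_EFinP; exact: ymax_meas. Qed.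

Lemma mpos k c : measurable_fun setT (fun w => Num.max (ymax n X k w - c) 0).
Proof.
apply: measurable_maxr; last exact: measurable_cst.
apply: measurable_funB; [exact: ymax_meas|exact: measurable_cst].
Qed.

Lemma Ey_bound s : (1 <= s <= n)%N ->
  (Expect P (ymax n X s) <= ((phi R ^+ 2) * beta s)%:E)%E.
Proof.
move=> hs; have [b0 bE] := beta_def _ hs.
have [p1 p2] := phi_facts R.
set c := phi R * beta s.
have c0 : 0 <= c by apply: mulr_ge0 => //; lra.
rewrite /Expect.
apply: (@le_trans _ _ (\int[P]_w (Num.max (ymax n X s w - c) 0 + c)%:E)%E).
  apply: ge0_le_integral => //.
  - by move=> w _; rewrite lee_fin ymax_ge0.
  - exact: mEy.
  - apply/measurable_EFinP; apply: measurable_funD; [exact: mpos|exact: measurable_cst].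
  - by move=> w _; rewrite lee_fin -lerBlDr le_max lexx.
under eq_integral do rewrite EFinD.
rewrite ge0_integralD //.
- move: bE; rewrite /Expect => ->.
  rewrite integral_cst //; set q := (X in (_ * X)%E); have -> : q = 1%E by exact: probability_setT.
  rewrite mule1 -EFinD lee_fin p2 /c; lra.
all: try (by move=> w _; rewrite lee_fin le_max lexx orbT).
all: try (by apply/measurable_EFinP; exact: mpos).
all: try (by move=> w _; rewrite lee_fin).
all: try (exact: measurable_cst).
Qed.

Lemma Ey_ge0 s : (0 <= Expect P (ymax n X s))%E.
Proof. by apply: integral_ge0 => w _; rewrite lee_fin ymax_ge0. Qed.

Lemma Ey_fin s : (1 <= s <= n)%N -> Expect P (ymax n X s) \is a fin_num.
Proof.
move=> hs; rewrite ge0_fin_numE ?Ey_ge0 //.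
exact: le_lt_trans (Ey_bound _ hs) (ltry _).
Qed.

Lemma alpha_le s : (1 <= s <= n)%N -> alpha P n X s <= phi R * beta s.
Proof.
move=> hs; have [p1 p2] := phi_facts R.
have hb := Ey_bound _ hs.
have hf := Ey_fin _ hs.
rewrite -(fineK hf) lee_fin in hb.
rewrite /alpha ler_pdivrMl; last lra.
by rewrite mulrA -expr2.
Qed.

Lemma beta_n : (1 <= n)%N -> beta n = 0.
Proof.
move=> n1; have hn : (1 <= n <= n)%N by rewrite n1 leqnn.
have [b0 bE] := beta_def _ hn.
move: bE; rewrite /Expect.
under eq_integral => w _ do rewrite ymax_n sub0r.
have [p1 _] := phi_facts R.
have h : Num.max (- (phi R * beta n)) 0 = 0.
  by apply/max_r; rewrite oppr_le0; apply: mulr_ge0 => //; lra.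
rewrite h integral0 => /esym; by case.
Qed.

Lemma algv_bnd tau m i w : (i.+1 + m <= n.+1)%N ->
  0 <= algv X tau m i.+1 w <= ymax n X i w.
Proof.
elim: m i => [|m IH] i /= h; first by rewrite lexx ymax_ge0.
have iN : (i < n)%N by move: h; rewrite addnS !ltnS => /(leq_trans _)->//; rewrite leq_addr.
rewrite ymax_rec //.
have hX : 0 <= X i.+1 w by apply: Xnneg; rewrite iN.
have h' : (i.+2 + m <= n.+1)%N by rewrite addSn -addnS.
have /andP[h1 h2] := IH i.+1 h'.
case: ifP => _; apply/andP; split => //; rewrite le_max ?lexx //.
by rewrite h2 orbT.
Qed.

Lemma algv_int tau m i : (1 <= i)%N -> (i.+1 + m <= n.+1)%N ->
  P.-integrable setT (EFin \o algv X tau m i.+1).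
Proof.
move=> i1 h; have iN : (i <= n)%N.
  by move: h; rewrite ltnS => /(leq_trans _)->//; rewrite leq_addr.
apply/integrableP; split.
  by apply/measurable_EFinP; exact: algv_meas.
apply: (@le_lt_trans _ _ (Expect P (ymax n X i))).
  apply: ge0_le_integral => //.
  - apply: measurableT_comp => //; apply/measurable_EFinP; exact: algv_meas.
  - exact: mEy.
  - move=> w _ /=; have /andP[a1 a2] := algv_bnd tau m i w h.
    by rewrite lee_fin ger0_norm.
have hi : (1 <= i <= n)%N by rewrite i1 iN.
have hf := Ey_fin _ hi.
by rewrite -(fineK hf) ltry.
Qed.

Definition taus s := Num.max (alpha P n X s) (beta s).

Lemma memB (f : T -> R) (a : R) w :
  (w \in f @^-1` `[a, +oo[%classic) = (a <= f w).
Proof.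
by apply/idP/idP; [move=> /set_mem; rewrite /= in_itv /= andbT |
  move=> h; apply/mem_set; rewrite /= in_itv /= andbT].
Qed.

Lemma step m j : (2 <= j)%N -> (j.+1 + m <= n.+1)%N ->
  ((beta j)%:E <= Expect P (algv X taus m j.+1))%E ->
  ((beta j.-1)%:E <= Expect P (algv X taus m.+1 j))%E.
Proof.
move=> j2 hjm IH.
have jn : (j <= n)%N by lia.
have hj : (1 <= j <= n)%N by lia.
have hj1 : (1 <= j.-1 <= n)%N by lia.
have [p1 p2] := phi_facts R.
have [b0 bE] := beta_def _ hj.
have [c0 cE] := beta_def _ hj1.
set b := beta j in b0 bE IH *; set c := beta j.-1 in c0 cE *.
set ta := taus j.
have bta : b <= ta by rewrite /ta /taus le_max lexx orbT.
have al : alpha P n X j <= phi R * b by exact: alpha_le.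
have mW' : measurable_fun setT (algv X taus m j.+1) by apply: algv_meas.
set A := X j @^-1` `]-oo, ta[%classic.
set B := X j @^-1` `[ta, +oo[%classic.
have mA : measurable A by apply: measurable_funPTI; exact: measurable_itv.
have mB : measurable B by apply: measurable_funPTI; exact: measurable_itv.
pose Dk := fun w => if ta <= X j w then X j w - b else 0.
have Dk0 w : 0 <= Dk w by rewrite /Dk; case: ifP => h //; lra.
have mDk : measurable_fun setT Dk.
  apply: measurable_fun_ifT.
  - apply: measurable_fun_ler => //; exact: measurable_cst.
  - apply: measurable_funB => //; exact: measurable_cst.
  - exact: measurable_cst.
have mDkE : measurable_fun setT (EFin \o Dk) by apply/measurable_EFinP.
have E4 : (c%:E <= \int[P]_w (Dk w)%:E + b%:E)%E.
  have iD0 : (0 <= \int[P]_w (Dk w)%:E)%E.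
    by apply: integral_ge0 => w _; rewrite lee_fin.
  have [cb|bc] := leP c b.
    by rewrite -[X in (X <= _)%E]add0e; apply: leeD => //; rewrite lee_fin.
  have ta_r : ta <= phi R * c.
    have h1 : alpha P n X j <= phi R * c.
      apply: (le_trans al); rewrite ler_pM2l; [exact: ltW|lra].
    have h2 : b <= phi R * c by nra.
    by rewrite /ta /taus ge_max h1 h2.
  rewrite -cE -bE /Expect -ge0_integralD //; last first.
  - apply/measurable_EFinP; exact: mpos.
  - by move=> w _; rewrite lee_fin le_max lexx orbT.
  - by move=> w _; rewrite lee_fin.
  apply: ge0_le_integral => //.
  - by move=> w _; rewrite lee_fin le_max lexx orbT.
  - apply/measurable_EFinP; exact: mpos.
  - apply/measurable_EFinP; apply: measurable_funD => //; exact: mpos.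
  move=> w _; rewrite lee_fin.
  have jn1 : (j.-1 < n)%N by lia.
  rewrite ymax_rec // (_ : j.-1.+1 = j); last by lia.
  apply: ptwise => //; first exact: ymax_ge0.
  by rewrite ler_pM2l; [exact: ltW|lra].
have iW : P.-integrable setT (EFin \o algv X taus m j.+1).
  by apply: algv_int => //; lia.
have W0 w : 0 <= algv X taus m j.+1 w.
  by have /andP[] := algv_bnd taus m j w hjm.
have indep : (\int[P]_(x in A) (algv X taus m j.+1 x)%:E =
              P A * Expect P (algv X taus m j.+1))%E.
  apply: (@indep_int _ _ _ P _ mW' W0 iW A mA) => u u0.
  have HW := @Wset_indep _ _ _ P n X Xindep taus u j `]-oo, ta[%classic u0
    (measurable_itv _) hj m j.+1 (fun _ => setT) (ltnSn j) hjm
    (fun _ => measurableT) erefl.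
  have eR : Rect n X (upd (fun _ => setT) j `]-oo, ta[%classic) = A.
    have := @Rect_upd _ _ _ P n X (fun _ => setT) j `]-oo, ta[%classic hj.
    by rewrite setTI RectT setTI.
  by rewrite eR RectT setTI setIC in HW.
have E1 : Expect P (algv X taus m.+1 j) =
  (\int[P]_w (Dk w)%:E + b%:E * P B + P A * Expect P (algv X taus m j.+1))%E.
  rewrite -indep (integral_mkcond A) /Expect.
  have pw w : (algv X taus m.+1 j w)%:E =
    ((Dk w)%:E + (b * \1_B w)%:E + ((EFin \o algv X taus m j.+1) \_ A) w)%E.
    rewrite /= patchE memA indicE memB /Dk.
    have pt : (point : \bar R) = 0%E by [].
    case: ifP => h; rewrite ltNge h /= ?pt.
    - by rewrite mulr1 -!EFinD subrK addr0.
    - by rewrite mulr0 add0e add0e.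
  transitivity (\int[P]_w ((Dk w)%:E + (b * \1_B w)%:E + ((EFin \o algv X taus m j.+1) \_ A) w))%E.
    apply: eq_integral => w _. by apply: pw.
  have mI : measurable_fun setT (EFin \o (fun w => b * \1_B w)).
    apply/measurable_EFinP; apply: measurable_funM; first exact: measurable_cst.
    exact: measurable_indic.
  have mP : measurable_fun setT ((EFin \o algv X taus m j.+1) \_ A).
    apply/(measurable_restrictT _ mA).1; apply: (measurable_funS measurableT) => //.
    exact/measurable_EFinP.
  have P0 w : (0 <= ((EFin \o algv X taus m j.+1) \_ A) w)%E.
    by rewrite patchE; case: ifP => _; rewrite /= ?lee_fin.
  have I0 w : (0 <= (b * \1_B w)%:E)%E.
    by rewrite lee_fin; apply: mulr_ge0 => //; rewrite indicE.
  rewrite ge0_integralD //; last first.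
  - apply: emeasurable_funD => //.
  - by move=> w _; apply: adde_ge0 => //; rewrite lee_fin.
  rewrite ge0_integralD //; last by move=> w _; rewrite lee_fin.
  congr (_ + _ + _)%E.
  under eq_integral => w _ do rewrite EFinM.
  have mI1 : measurable_fun setT (EFin \o (\1_B : T -> R)).
    apply/measurable_EFinP; exact: measurable_indic.
  have I1 : forall w, setT w -> (0 <= (\1_B w : R)%:E)%E.
    by move=> w _; rewrite lee_fin indicE.
  rewrite ge0_integralZl_EFin //.
  by rewrite integral_indic // setIT.
have PAB : (P A + P B = 1)%E.
  rewrite -measureU //; last first.
    apply/seteqP; split => w //= [h1 h2].
    move/mem_set: h1; rewrite /A memA => h1.
    move/mem_set: h2; rewrite /B memB => h2.
    by move: (lt_le_trans h1 h2); rewrite ltxx.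
  rewrite (_ : A `|` B = setT); first exact: probability_setT.
  apply/seteqP; split => w //= _.
  case: (ltP (X j w) ta) => h; [left|right]; apply/set_mem.
  - by rewrite /A memA.
  - by rewrite /B memB.
apply: (le_trans E4); rewrite E1 -addeA leeD2l //.
have h1 : (P A * b%:E <= P A * Expect P (algv X taus m j.+1))%E.
  by apply: lee_wpmul2l => //; exact: measure_ge0.
apply: (@le_trans _ _ (b%:E * P B + P A * b%:E)%E); last by apply: leeD2l.
rewrite (muleC (P A)) -ge0_muleDr ?measure_ge0 // addeC PAB mule1 //.
Qed.

Lemma main_ind : (2 <= n)%N -> forall m k, (n - k)%N = m -> (1 <= k <= n)%N ->
  ((beta k)%:E <= Expect P (algv X taus m k.+1))%E.
Proof.
move=> n2; elim=> [|m IH] k hk hkn.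
  have -> : k = n by lia.
  rewrite beta_n; last by lia.
  by apply: integral_ge0 => w _ /=.
have := IH k.+1 ltac:(lia) ltac:(lia).
move/(@step m k.+1 ltac:(lia) ltac:(lia)).
by [].
Qed.

End Main.

Theorem lemma3p2 (d : measure_display) (T : measurableType d) (R : realType)
  (P : probability T R) (n : nat) (X : nat -> {RV P >-> R})
  (beta : nat -> R)
  (Xindep : mutually_independent P n X)
  (Xnneg : forall s w, (1 <= s <= n)%N -> 0 <= X s w)
  (Xint : forall s, (1 <= s <= n)%N -> P.-integrable setT (fun w => (X s w)%:E))
  (beta_def : forall t, (1 <= t <= n)%N ->
     0 <= beta t /\
     Expect P (fun w => Num.max (ymax n X t w - phi R * beta t) 0) = (beta t)%:E)
  (t : nat) (ht : (1 <= t <= n.-1)%N) :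
  let tau := fun s => Num.max (alpha P n X s) (beta s) in
  ((beta t)%:E <= Expect P (algv X tau (n - t) t.+1))%E /\
  ((((phi R) ^+ 2)^-1)%:E * Expect P (ymax n X t) <= (beta t)%:E)%E /\
  ((((phi R) ^+ 2)^-1)%:E * Expect P (ymax n X t) = ((phi R)^-1 * alpha P n X t)%:E)%E.
Proof.
move=> tau.
have hn : (2 <= n)%N by lia.
have ht' : (1 <= t <= n)%N by lia.
have [p1 p2] := phi_facts R.
have ph0 : 0 < phi R ^+ 2 by apply: exprn_gt0; lra.
split.
  exact: (@main_ind _ _ _ P n X beta Xindep Xnneg beta_def hn (n - t) t erefl ht').
split.
- have hb := @Ey_bound _ _ _ P n X beta beta_def t ht'.
  apply: (le_trans (lee_wpmul2l _ hb)); first by rewrite lee_fin invr_ge0 ltW.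
  by rewrite -EFinM mulrA mulVf ?mul1r // gt_eqF.
- have hf := @Ey_fin _ _ _ P n X beta beta_def t ht'.
  rewrite -(fineK hf) -EFinM /alpha; congr EFin.
  by rewrite mulrA -invfM -expr2.
Qed.
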